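(* Let $d,j$ be integers with $d\ge 3$ and $d\le j\le \left\lfloor \frac{3(d-1)}{2}\right\rfloor$. Let $\lambda_1,\dots,\lambda_t$ be the elements of $\mathscr{P}_{3,d-1}(j)$ and $\mu_1,\dots,\mu_s$ the elements of $\mathscr{P}_{3,d-1}(j-1)$, and define the $s\times t$ matrix $C=(C_{pq})$ by $E([x^{\lambda_q}])=\sum_{p=1}^{s} C_{pq}[x^{\mu_p}]$. Then $\operatorname{rank} C = s = p_{3,d-1}(j-1)$.
   Context: $\Bbbk$ is an algebraically closed field of characteristic $0$. For an integer $d\ge 1$, $A(d)=\Bbbk[x_1,x_2,x_3]/(x_1^d,x_2^d,x_3^d)=\bigoplus_j A(d)_j$ with its standard grading; the monomials $x_1^{a_1}x_2^{a_2}x_3^{a_3}$ with $0\le a_i\le d-1$ form a basis. The linear map $E:A(d)_{j+1}\to A(d)_j$ is defined on monomials by $E(x_1^{a_1}x_2^{a_2}x_3^{a_3})=\sum_{k=1}^{3} a_k(d-a_k)\,x_1^{a_1}\cdots x_k^{a_k-1}\cdots x_3^{a_3}$ (terms with $a_k=0$ vanish). For integers $l\ge 0$ and $n$, $\mathscr{P}_{3,l}(n)$ is the set of integer triples $(a,b,c)$ with $l\ge a\ge b\ge c\ge 0$, $a+b+c=n$, and $p_{3,l}(n)=|\mathscr{P}_{3,l}(n)|$. For $\lambda=(a,b,c)$, $[x^\lambda]$ denotes the sum of the distinct monomials in the orbit of $x_1^ax_2^bx_3^c$ under the action of $S_3$ permuting the variables. *)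

(* Defs.v *)
From HB Require Import structures.
From mathcomp Require Import all_boot all_order all_algebra all_fingroup.
Set Implicit Arguments. Unset Strict Implicit. Unset Printing Implicit Defensive.
Import GRing.Theory.
Local Open Scope ring_scope.

(* Monomials x1^a1 x2^a2 x3^a3 of A(d) = k[x1,x2,x3]/(x1^d,x2^d,x3^d), 0 <= a_i <= d-1,
   encoded by their exponent vectors. *)
Notation mono d := {ffun 'I_3 -> 'I_d}.

(* An element of A(d) is a K-linear combination of the monomial basis:
   a function giving the coefficient of each basis monomial. *)
Notation Aelt K d := {ffun mono d -> K}.

Definition tr3 (l : nat * nat * nat) (i : 'I_3) : nat :=
  let: (a, b, c) := l in
  match val i with 0 => a | 1 => b | _ => c end.

(* [x^lambda] : sum of the distinct monomials in the S_3-orbit of x1^a x2^b x3^c,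
   i.e. the indicator of the orbit set. *)
Definition orbsum (K : fieldType) (d : nat) (l : nat * nat * nat) : Aelt K d :=
  [ffun m : mono d =>
     if [exists s : 'S_3, [forall i : 'I_3, val (m i) == tr3 l (s i)]] then 1 else 0].

(* E applied to a single monomial m:
   E(m) = sum_k a_k (d - a_k) * (m with a_k replaced by a_k - 1), terms with a_k = 0 vanish. *)
Definition Emono (K : fieldType) (d : nat) (m : mono d) : Aelt K d :=
  [ffun m' : mono d =>
     \sum_(k : 'I_3)
       if (0 < val (m k))%N &&
          [forall i : 'I_3, val (m' i) == (if i == k then (val (m k)).-1 else val (m i))]
       then ((val (m k)) * (d - val (m k)))%:R else 0].

Definition Emap (K : fieldType) (d : nat) (f : Aelt K d) : Aelt K d :=
  [ffun m' : mono d => \sum_(m : mono d) f m * @Emono K d m m'].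

(* P_{3,l}(n): triples (a,b,c) with l >= a >= b >= c >= 0 and a+b+c = n (as a duplicate-free list). *)
Definition P3 (l n : nat) : seq (nat * nat * nat) :=
  [seq x <- flatten [seq [seq (ab.1, ab.2, c) | c <- iota 0 l.+1]
                         | ab <- [seq (a, b) | a <- iota 0 l.+1, b <- iota 0 l.+1]]
     | let: (a, b, c) := x in [&& (b <= a)%N, (c <= b)%N & (a + b + c == n)%N]].

Definition p3 (l n : nat) : nat := size (P3 l n).

(* Main.v *)
Require Import Defs.
From HB Require Import structures.
From mathcomp Require Import all_boot all_order all_algebra all_fingroup.
From mathcomp Require Import zify ring.
Set Implicit Arguments. Unset Strict Implicit. Unset Printing Implicit Defensive.
Import GRing.Theory.
Local Open Scope ring_scope.

Section Work.
Variable K : fieldType.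
Variable d : nat.
Implicit Types f g : Aelt K d.
Implicit Types m : mono d.

Definition up (k : 'I_3) (m : mono d) : mono d :=
  [ffun i => if i == k then insubd (m i) (val (m i)).+1 else m i].
Definition dn (k : 'I_3) (m : mono d) : mono d :=
  [ffun i => if i == k then insubd (m i) (val (m i)).-1 else m i].
Definition cE (a : nat) : K := (a * (d - a))%:R.
Definition Fmap f : Aelt K d :=
  [ffun m : mono d => \sum_(k : 'I_3) if (0 < val (m k))%N then f (dn k m) else 0].
Definition deg m := (\sum_(i : 'I_3) val (m i))%N.

Lemma val_up k m i : val (up k m i) =
  if i == k then (if (val (m i)).+1 < d then (val (m i)).+1 else val (m i))%N
  else val (m i).
Proof. by rewrite ffunE; case: (i == k); rewrite ?val_insubd. Qed.

Lemma val_dn k m i : val (dn k m i) = if i == k then (val (m i)).-1 else val (m i).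
Proof.
rewrite ffunE; case: (i == k) => //; rewrite val_insubd.
by rewrite (leq_ltn_trans (leq_pred _) (ltn_ord _)).
Qed.

Lemma keyE m m' k :
  (0 < val (m k))%N &&
  [forall i : 'I_3, val (m' i) == (if i == k then (val (m k)).-1 else val (m i))]
  = ((val (m' k)).+1 < d)%N && (m == up k m').
Proof.
apply/andP/andP.
- case=> pos /forallP H; have := H k; rewrite eqxx => /eqP Hk.
  have lt : ((val (m' k)).+1 < d)%N by rewrite Hk prednK // ltn_ord.
  split => //; apply/eqP/ffunP => i; apply: val_inj; rewrite val_up.
  case: (i =P k) => [->|/eqP ne]; first by rewrite lt Hk prednK.
  by have := H i; rewrite (negbTE ne) => /eqP ->.
- case=> lt /eqP ->; rewrite val_up eqxx lt; split => //.
  apply/forallP => i; rewrite !val_up; case: (i =P k) => [->|_] //.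
Qed.

Lemma Emap_eval f m' : Emap f m' = \sum_(k : 'I_3)
  if ((val (m' k)).+1 < d)%N then f (up k m') * cE (val (m' k)).+1 else 0.
Proof.
rewrite ffunE; under eq_bigr => m _ do rewrite ffunE big_distrr.
rewrite exchange_big /=; apply: eq_bigr => k _.
rewrite (eq_bigr (fun m => if m == up k m' then
   (if ((val (m' k)).+1 < d)%N then f (up k m') * cE (val (m' k)).+1 else 0) else 0)).
  by rewrite -big_mkcond big_pred1_eq.
move=> m _; rewrite keyE; case: eqP => [->|_]; rewrite ?andbT ?andbF ?mulr0 //.
case: ifP => lt; rewrite ?mulr0 // val_up eqxx lt //.
Qed.

Lemma Fmap_eval f m : Fmap f m =
  \sum_(k : 'I_3) if (0 < val (m k))%N then f (dn k m) else 0.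
Proof. by rewrite ffunE. Qed.


Lemma dn_up_comm k l m : k != l -> dn l (up k m) = up k (dn l m).
Proof.
move=> ne; apply/ffunP => i; apply: val_inj; rewrite !(val_up, val_dn).
case: (i =P k) => [->|nik]; case: (i =P l) => [E|nil] //=.
all: by rewrite (negbTE ne).
Qed.

Lemma dn_up k m : ((val (m k)).+1 < d)%N -> dn k (up k m) = m.
Proof.
move=> lt; apply/ffunP => i; apply: val_inj; rewrite !(val_up, val_dn).
by case: (i =P k) => [->|_] //; rewrite ?eqxx ?lt.
Qed.

Lemma up_dn k m : (0 < val (m k))%N -> up k (dn k m) = m.
Proof.
move=> pos; apply/ffunP => i; apply: val_inj; rewrite !(val_up, val_dn).
case: (i =P k) => [->|_] //; by rewrite ?eqxx prednK // ltn_ord.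

Qed.

Lemma cE_diff a : (a < d)%N -> cE a.+1 - cE a = (d - 1)%:R - (2 * a)%:R.
Proof.
move=> lt; rewrite /cE.
have H : ((a.+1 * (d - a.+1)) + 2 * a = (a * (d - a)) + (d - 1))%N by nia.
move: H; set X := (a.+1 * _)%N; set Y := (a * _)%N; set A := (2 * a)%N.
set D := (d - 1)%N.
move/(congr1 (fun n => n%:R : K)); rewrite (natrD _ X A) (natrD _ Y D) => H.
rewrite -/A; clearbody X Y A D.
rewrite -[Z in Z - _ = _](addrK A%:R) H; ring.
Qed.

Lemma comm_EF f m : Emap (Fmap f) m =
  Fmap (Emap f) m + ((3 * (d - 1))%:R - (2 * deg m)%:R) * f m.
Proof.
rewrite Emap_eval Fmap_eval.
under eq_bigr => k _ do rewrite Fmap_eval.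
under [X in _ = X + _]eq_bigr => l _ do rewrite Emap_eval.
pose T1 k l := if ((val (m k)).+1 < d)%N && (0 < val (up k m l))%N
   then f (dn l (up k m)) * cE (val (m k)).+1 else 0.
pose T2 k l := if (0 < val (m l))%N && ((val (dn l m k)).+1 < d)%N
   then f (up k (dn l m)) * cE (val (dn l m k)).+1 else 0.
have E1 : \sum_(k < 3) (if ((val (m k)).+1 < d)%N then
    (\sum_(l < 3) (if (0 < val (up k m l))%N then f (dn l (up k m)) else 0))
      * cE (val (m k)).+1 else 0) = \sum_k \sum_l T1 k l.
  apply: eq_bigr => k _; rewrite /T1; case: ifP => _ /=.
    by rewrite mulr_suml; apply: eq_bigr => l _; case: ifP; rewrite ?mul0r.
  by rewrite big1.
have E2 : \sum_(l < 3) (if (0 < val (m l))%N then \sum_(k < 3)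
    (if ((val (dn l m k)).+1 < d)%N then f (up k (dn l m)) * cE (val (dn l m k)).+1
     else 0) else 0) = \sum_k \sum_l T2 k l.
  rewrite exchange_big /=; apply: eq_bigr => l _; rewrite /T2; case: ifP => _ /=.
    by [].
  by rewrite big1.
rewrite E1 E2.
have D : forall k l, k != l -> T1 k l = T2 k l.
  move=> k l ne; rewrite /T1 /T2 dn_up_comm // !(val_up, val_dn).
  by rewrite eq_sym (negbTE ne) andbC.
have Dk : forall k, T1 k k - T2 k k = ((d - 1)%:R - (2 * val (m k))%:R) * f m.
  move=> k.
  have hk := ltn_ord (m k).
  have e1 : T1 k k = f m * cE (val (m k)).+1.
    rewrite /T1 val_up eqxx; case: (boolP ((val (m k)).+1 < d)%N) => lt /=.
      by rewrite dn_up.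
    have -> : (val (m k)).+1 = d by apply/eqP; rewrite eqn_leq hk leqNgt lt.
    by rewrite /cE subnn muln0 mulr0.
  have e2 : T2 k k = f m * cE (val (m k)).
    rewrite /T2 val_dn eqxx; case: (posnP (val (m k))) => [->|pos].
      by rewrite /cE mul0n mulr0.
    by rewrite /= prednK // hk up_dn.
  by rewrite e1 e2 -mulrBr cE_diff // mulrC.
apply/eqP; rewrite addrC -subr_eq -sumrB.
rewrite (eq_bigr (fun k => ((d - 1)%:R - (2 * val (m k))%:R) * f m)); last first.
  move=> k _; rewrite -sumrB (bigD1 k) //= -Dk big1 ?addr0 // => l ne.
  by rewrite D ?subrr // eq_sym.
rewrite -mulr_suml /deg !big_ord_recl !big_ord0 !addr0 addn0.
apply/eqP; congr (_ * _); rewrite !natrM !natrD; ring.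
Qed.


Definition degf f n := forall m, deg m != n -> f m = 0.
Definition symf f := forall (s : 'S_3) m, f [ffun i => m (s i)] = f m.

Lemma Emap_lin f g a b x :
  Emap [ffun y => a * f y + b * g y] x = a * Emap f x + b * Emap g x.
Proof.
rewrite !Emap_eval !mulr_sumr -big_split; apply: eq_bigr => k _.
by case: ifP => _; rewrite ?mulr0 ?addr0 // ?ffunE ?mulrDl ?mulrA //= addr0.
Qed.

Lemma Fmap_lin f g a b x :
  Fmap [ffun y => a * f y + b * g y] x = a * Fmap f x + b * Fmap g x.
Proof.
rewrite !Fmap_eval !mulr_sumr -big_split; apply: eq_bigr => k _.
by case: ifP => _; rewrite ?mulr0 ?addr0 // ?ffunE //= addr0.
Qed.

Lemma deg_up k m : ((val (m k)).+1 < d)%N -> deg (up k m) = (deg m).+1.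
Proof.
move=> lt; rewrite /deg (bigD1 k) //= [in RHS](bigD1 k) //= val_up eqxx lt.
congr (_ + _)%N; apply: eq_bigr => i ne; by rewrite val_up (negbTE ne).
Qed.

Lemma deg_dn k m : (0 < val (m k))%N -> (deg (dn k m)).+1 = deg m.
Proof.
move=> pos; rewrite /deg (bigD1 k) //= [in RHS](bigD1 k) //= val_dn eqxx.
rewrite -addSn prednK //; congr (_ + _)%N; apply: eq_bigr => i ne.
by rewrite val_dn (negbTE ne).
Qed.

Lemma degf_E f n : degf f n.+1 -> degf (Emap f) n.
Proof.
move=> H m ne; rewrite Emap_eval big1 // => k _; case: ifP => // lt.
by rewrite H ?mul0r // deg_up // eqSS.
Qed.

Lemma degf_E0 f : degf f 0 -> forall m, Emap f m = 0.
Proof.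
move=> H m; rewrite Emap_eval big1 // => k _; case: ifP => // lt.
by rewrite H ?mul0r // deg_up.
Qed.

Lemma degf_F f n : degf f n -> degf (Fmap f) n.+1.
Proof.
move=> H m ne; rewrite Fmap_eval big1 // => k _; case: ifP => // pos.
apply: H; apply: contra ne => /eqP <-; by rewrite deg_dn.
Qed.

Lemma degf_iterF f n p : degf f n -> degf (iter p Fmap f) (n + p)%N.
Proof.
move=> H; elim: p => [|p IH]; first by rewrite addn0.
by rewrite addnS; apply: degf_F.
Qed.

Definition hh (n : nat) : K := (3 * (d - 1))%N%:R - (2 * n)%N%:R.
Definition SS r p : K := \sum_(i < p.+1) hh (r + i)%N.

Lemma comm_deg f n x : degf f n ->
  Emap (Fmap f) x = Fmap (Emap f) x + hh n * f x.
Proof.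
move=> H; rewrite comm_EF /hh; case: (deg x =P n) => [->|/eqP ne] //.
by rewrite H ?mulr0.
Qed.

Lemma iter_comm g r p x : degf g r ->
  Emap (iter p.+1 Fmap g) x =
  iter p.+1 Fmap (Emap g) x + SS r p * iter p Fmap g x.
Proof.
move=> H; elim: p x => [|p IH] x.
  by rewrite /= (comm_deg _ H) /SS big_ord1 addn0.
rewrite [iter p.+2 _ _]/= (comm_deg _ (@degf_iterF _ _ p.+1 H)).
have -> : Emap (iter p.+1 Fmap g) =
   [ffun y => 1 * iter p.+1 Fmap (Emap g) y + SS r p * iter p Fmap g y].
  by apply/ffunP => y; rewrite [in RHS]ffunE IH mul1r.
rewrite Fmap_lin mul1r /SS -addrA; congr (_ + _); rewrite -mulrDl; congr (_ * _).
by rewrite [in RHS]big_ord_recr /= addnS.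
Qed.

Lemma up_perm (s : 'S_3) k m :
  up k [ffun i => m (s i)] = [ffun i => (up (s k) m) (s i)].
Proof.
apply/ffunP => i; apply: val_inj; rewrite !ffunE.
by rewrite (inj_eq perm_inj).
Qed.

Lemma dn_perm (s : 'S_3) k m :
  dn k [ffun i => m (s i)] = [ffun i => (dn (s k) m) (s i)].
Proof.
apply/ffunP => i; apply: val_inj; rewrite !ffunE.
by rewrite (inj_eq perm_inj).
Qed.

Lemma symf_E f : symf f -> symf (Emap f).
Proof.
move=> H s m; rewrite !Emap_eval [in RHS](reindex_inj (@perm_inj _ s)) /=.
apply: eq_bigr => k _; by rewrite !ffunE up_perm H.
Qed.

Lemma symf_F f : symf f -> symf (Fmap f).
Proof.
move=> H s m; rewrite !Fmap_eval [in RHS](reindex_inj (@perm_inj _ s)) /=.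
apply: eq_bigr => k _; by rewrite !ffunE dn_perm H.
Qed.

Lemma symf_iterF f p : symf f -> symf (iter p Fmap f).
Proof. by move=> H; elim: p => //= p IH; apply: symf_F. Qed.


Lemma iterF0 f p : (forall m, f m = 0) -> forall x, iter p Fmap f x = 0.
Proof.
move=> H; elim: p => [|p IH] x //=.
by rewrite Fmap_eval big1 // => k _; rewrite IH; case: ifP.
Qed.

Lemma symf_lin f g a b : symf f -> symf g -> symf [ffun y => a * f y + b * g y].
Proof. by move=> Hf Hg s m; rewrite !ffunE Hf Hg. Qed.

Lemma degf_lin f g a b n : degf f n -> degf g n -> degf [ffun y => a * f y + b * g y] n.
Proof. by move=> Hf Hg m ne; rewrite ffunE Hf ?Hg // !mulr0 addr0. Qed.

Hypothesis hc : [pchar K] =i pred0.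

Lemma SS_neq0 r p K0 : (2 * K0 < 3 * (d - 1))%N -> (r + p <= K0)%N -> SS r p != 0.
Proof.
move=> hK hrp.
have -> : SS r p = (\sum_(i < p.+1) (3 * (d - 1) - 2 * (r + i))%N)%:R.
  rewrite natr_sum; apply: eq_bigr => i _; rewrite /hh natrB //.
  have := ltn_ord i; lia.
rewrite ((pcharf0P K).1 hc) big_ord_recl addn_eq0 negb_and; apply/orP; left.
rewrite -lt0n subn_gt0 /=; lia.
Qed.

Lemma claim K0 (hK : (2 * K0 < 3 * (d - 1))%N) r : forall p g, (r + p <= K0)%N ->
  degf g r -> symf g -> exists z, [/\ degf z (r + p).+1, symf z &
    forall x, Emap z x = iter p Fmap g x].
Proof.
elim: r => [|r IH] p g hrp hg sg.
- have hS : SS 0 p != 0 := SS_neq0 hK hrp.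
  exists [ffun y => (SS 0 p)^-1 * iter p.+1 Fmap g y + 0 * g y]; split.
  + move=> m ne; rewrite ffunE mul0r addr0 (degf_iterF (p := p.+1) hg) ?mulr0 //.
  + by apply: symf_lin => //; apply: symf_iterF.
  + move=> x; rewrite Emap_lin mul0r addr0 (iter_comm _ _ hg).
    rewrite (@iterF0 (Emap g) p.+1 (degf_E0 hg)) add0r mulrA mulVf // mul1r.
    done.
- have hS : SS r.+1 p != 0 := SS_neq0 hK hrp.
  have hrp' : (r + p.+1 <= K0)%N by rewrite addnS.
  have [z' [dz' sz' ez']] := IH p.+1 (Emap g) hrp' (degf_E hg) (symf_E sg).
  exists [ffun y => (SS r.+1 p)^-1 * iter p.+1 Fmap g y + (- (SS r.+1 p)^-1) * z' y].
  split.
  + apply: degf_lin; first by rewrite -addnS; apply: degf_iterF.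
    by rewrite addSn -addnS.
  + by apply: symf_lin => //; apply: symf_iterF.
  + move=> x; rewrite Emap_lin (iter_comm _ _ hg) ez' mulrDr mulrA mulVf //.
    ring.
Qed.

End Work.

Definition tl (l : nat * nat * nat) : 3.-tuple nat := [tuple l.1.1; l.1.2; l.2].
Definition srt (l : nat * nat * nat) := [&& (l.1.2 <= l.1.1)%N & (l.2 <= l.1.2)%N].

Lemma tr3_tl l i : tr3 l i = tnth (tl l) i.
Proof. case: l => [[a b] c]; case: i => [[|[|[|]]] ?] //. Qed.

Lemma sorted_tl l : srt l -> sorted geq (tl l).
Proof. by case: l => [[a b] c] /andP [h1 h2] /=; rewrite h1 h2. Qed.

Lemma anti_geq : antisymmetric geq.
Proof. move=> x y /andP [h1 h2]; apply/eqP; rewrite eqn_leq; apply/andP; split; [exact: h2|exact: h1]. Qed.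

Lemma geq_tr : transitive geq.
Proof. move=> y x z h1 h2; exact: leq_trans h2 h1. Qed.

Lemma geq_tot : total geq.
Proof. move=> x y; exact: leq_total. Qed.

Lemma tl_inj l l' : srt l -> srt l' -> perm_eq (tl l) (tl l') -> l = l'.
Proof.
move=> s1 s2 /(perm_sortP geq_tot geq_tr anti_geq).
rewrite !(sorted_sort geq_tr) ?sorted_tl //.
by case: l s1 => [[a b] c]; case: l' s2 => [[a' b'] c'] _ _ [-> -> ->].
Qed.

Lemma mem_P3 l n x : (x \in P3 l n) =
  [&& (x.1.1 <= l)%N, (x.1.2 <= l)%N, (x.2 <= l)%N, srt x & (x.1.1 + x.1.2 + x.2 == n)%N].
Proof.
case: x => [[a b] c]; rewrite [srt _]/= [_.1.1]/= [_.1.2]/= [_.2]/= /P3 mem_filter.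
apply/andP/idP.
- case=> /and3P [h1 h2 h3] /allpairsP [[ab c'] [H1 H2 E]].
  move: H1 => /allpairsP [[a' b'] [H3 H4 E2]].
  move: H2 H3 H4; rewrite !mem_iota !add0n => /andP [_ hc] /andP [_ ha] /andP [_ hb].
  move: E ha hb hc; rewrite E2 /= => - [<- <- <-] ha hb hc.
  rewrite !ltnS in ha hb hc; by rewrite /srt /= h1 h2 h3 ha hb hc.
- case/and5P => ha hb hc /andP [h1 h2] h3; split; first by rewrite h1 h2 h3.
  apply/allpairsP; exists ((a, b), c); split.
  - by apply/allpairsP; exists (a, b); split; rewrite ?mem_iota ?ltnS.
  - by rewrite mem_iota ltnS.
  - by [].
Qed.

Lemma uniq_P3 l n : uniq (P3 l n).
Proof.
rewrite /P3 filter_uniq // allpairs_uniq //.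
- by rewrite allpairs_uniq ?iota_uniq // => [[? ?] [? ?]] _ _ [-> ->].
- by rewrite iota_uniq.
- by move=> [[? ?] ?] [[? ?] ?] _ _ /= [-> -> ->].
Qed.

Section Comb.
Variable K : fieldType.
Variable d : nat.
Variable x0 : 'I_d.
Implicit Types m : mono d.

Definition tm (m : mono d) : 3.-tuple nat := [tuple val (m i) | i < 3].
Definition rep (l : nat * nat * nat) : mono d := [ffun i => insubd x0 (tr3 l i)].

Lemma orbit_iff m l :
  [exists s : 'S_3, [forall i : 'I_3, val (m i) == tr3 l (s i)]] = perm_eq (tm m) (tl l).
Proof.
apply/existsP/tuple_permP.
- case=> s /forallP H; exists s; apply: (congr1 val); apply: eq_from_tnth => i.
  by rewrite !tnth_mktuple -tr3_tl; apply/eqP.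
- case=> s /val_inj E; exists s; apply/forallP => i.
  by have := congr1 (fun t => tnth t i) E; rewrite !tnth_mktuple -tr3_tl => ->.
Qed.

Lemma orbsumE l m : orbsum K d l m = if perm_eq (tm m) (tl l) then 1 else 0.
Proof. by rewrite ffunE orbit_iff. Qed.

Lemma deg_tm m : deg m = sumn (tm m).
Proof. by rewrite /deg sumnE big_map big_enum. Qed.

Lemma tm_perm (s : 'S_3) m : perm_eq (tm [ffun i => m (s i)]) (tm m).
Proof.
apply/tuple_permP; exists s; apply: (congr1 val); apply: eq_from_tnth => i.
by rewrite !tnth_mktuple ffunE.
Qed.

Lemma symf_orbsum l : symf (orbsum K d l).
Proof. by move=> s m; rewrite !orbsumE (permPl (tm_perm s m)). Qed.

Lemma degf_orbsum l n : (l.1.1 + l.1.2 + l.2 = n)%N -> degf (orbsum K d l) n.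
Proof.
move=> E m; rewrite orbsumE; case: ifP => // /perm_sumn.
by rewrite -deg_tm => ->; case: l E => [[a b] c] /= <-; rewrite addn0 addnA eqxx.
Qed.

Lemma bnd_tl l : (0 < d)%N -> l \in P3 (d - 1) (l.1.1 + l.1.2 + l.2) ->
  forall i, (tr3 l i < d)%N.
Proof.
move=> d0; rewrite mem_P3 => /and5P [ha hb hc _ _] i.
case: l ha hb hc => [[a b] c] /= ha hb hc; case: i => [[|[|[|]]] ?] //= ; lia.
Qed.

Lemma tm_rep l : (forall i, (tr3 l i < d)%N) -> tm (rep l) = tl l.
Proof.
move=> H; apply: eq_from_tnth => i; rewrite tnth_mktuple ffunE -tr3_tl.
by rewrite val_insubd H.
Qed.


Lemma P3_srt l n t : t \in P3 l n -> srt t.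
Proof. by rewrite mem_P3 => /and5P []. Qed.

Lemma P3_sum l n t : t \in P3 l n -> (t.1.1 + t.1.2 + t.2 = n)%N.
Proof. by rewrite mem_P3 => /and5P [_ _ _ _ /eqP]. Qed.

Lemma P3_bnd n t : (0 < d)%N -> t \in P3 (d - 1) n -> forall i, (tr3 t i < d)%N.
Proof. by move=> d0 H; apply: bnd_tl => //; rewrite (P3_sum H). Qed.

Lemma orbsum_rep l l' n n' : (0 < d)%N -> l \in P3 (d - 1) n -> l' \in P3 (d - 1) n' ->
  orbsum K d l (rep l') = if l' == l then 1 else 0.
Proof.
move=> d0 h h'; rewrite orbsumE tm_rep; last exact: P3_bnd h'.
case: eqP => [->|ne]; first by rewrite perm_refl.
case: ifP => // /tl_inj E; case: ne; apply: E; [exact: P3_srt h'|exact: P3_srt h].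
Qed.

Lemma exists_tri m : (0 < d)%N ->
  exists t, t \in P3 (d - 1) (deg m) /\ perm_eq (tm m) (tl t).
Proof.
move=> d0.
have sz : size (sort geq (tm m)) = 3 by rewrite size_sort size_tuple.
have srtd : sorted geq (sort geq (tm m)) := sort_sorted geq_tot _.
have pe : perm_eq (sort geq (tm m)) (tm m) by rewrite perm_sort.
case E: (sort geq (tm m)) sz srtd pe => [|x [|y [|z [|]]]] // _ srtd pe.
exists (x, y, z).
have pe' : perm_eq (tm m) (tl (x, y, z)) by rewrite perm_sym.
split => //.
have bnd : forall v, v \in [:: x; y; z] -> (v <= d - 1)%N.
  move=> v; rewrite (perm_mem pe) => /mapP [i _ ->]; rewrite subn1 -ltnS prednK //; exact: ltn_ord.
move: srtd => /= /and3P [h1 h2 _].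
rewrite mem_P3 /= !bnd ?inE ?eqxx ?orbT //= /srt /= h1 h2 /=.
rewrite deg_tm (perm_sumn pe') /=.
by rewrite addn0 addnA.
Qed.

Lemma decomp (f : Aelt K d) n (L : seq (nat * nat * nat)) t0 : (0 < d)%N ->
  symf f -> degf f n -> perm_eq L (P3 (d - 1) n) -> forall x,
  f x = \sum_(p < size L) f (rep (nth t0 L p)) * orbsum K d (nth t0 L p) x.
Proof.
move=> d0 sf df hL x.
rewrite -(big_mkord xpredT (fun p => f (rep (nth t0 L p)) * orbsum K d (nth t0 L p) x)).
rewrite -(big_nth t0 xpredT (fun l => f (rep l) * orbsum K d l x)).
rewrite (perm_big _ hL).
case: (deg x =P n) => [dx|/eqP ne]; last first.
  rewrite df // big1_seq // => l /andP [_ hl].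
  by rewrite (degf_orbsum (P3_sum hl)) ?mulr0.
have [t [ht pt]] := exists_tri x d0; rewrite dx in ht.
rewrite (bigD1_seq t) ?uniq_P3 //= big1_seq ?addr0; last first.
  move=> l /andP [ne hl]; rewrite orbsumE; case: ifP; rewrite ?mulr0 //.
  move=> pl; have : perm_eq (tl t) (tl l) by apply: perm_trans pl; rewrite perm_sym.
  move=> /tl_inj E; have {}E := E (P3_srt ht) (P3_srt hl).
  by rewrite E eqxx in ne.
rewrite orbsumE pt mulr1.
move: pt; rewrite -orbit_iff => /existsP [s /forallP H].
have -> : x = [ffun i => rep t (s i)].
  apply/ffunP => i; apply: val_inj; rewrite !ffunE val_insubd (P3_bnd d0 ht).
  exact/eqP.
by rewrite sf.
Qed.

End Comb.

Unset Implicit Arguments.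

Lemma Emap_sum (K : fieldType) d (f : Aelt K d) n (a : 'I_n -> K) (g : 'I_n -> Aelt K d) :
  (forall y, f y = \sum_q a q * g q y) ->
  forall x, Emap f x = \sum_q a q * Emap (g q) x.
Proof.
move=> H x; rewrite ffunE.
under eq_bigr => m _ do rewrite H mulr_suml.
rewrite exchange_big /=; apply: eq_bigr => q _.
rewrite ffunE mulr_sumr; apply: eq_bigr => m _; by rewrite mulrA.
Qed.

Theorem lemma3p3 (K : closedFieldType) (hchar : [pchar K] =i pred0)
  (d j : nat) (hd : (3 <= d)%N) (hdj : (d <= j)%N) (hj : (j <= (3 * (d - 1))./2)%N)
  (lam mu : seq (nat * nat * nat))
  (hlam : perm_eq lam (P3 (d - 1) j)) (hmu : perm_eq mu (P3 (d - 1) (j - 1))) :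
  let t := size lam in
  let s := size mu in
  let expansion (C : 'M[K]_(s, t)) :=
    forall (q : 'I_t) (m : mono d),
      Emap (orbsum K d (nth (0, 0, 0)%N lam q)) m =
      \sum_(p < s) C p q * orbsum K d (nth (0, 0, 0)%N mu p) m in
  (exists C : 'M[K]_(s, t), expansion C) /\
  (forall C : 'M[K]_(s, t), expansion C -> \rank C = s /\ s = p3 (d - 1) (j - 1)).
Proof.
move=> t s expansion.
have d0 : (0 < d)%N by apply: leq_trans hd.
pose x0 : 'I_d := Ordinal d0.
pose t0 := (0, 0, 0)%N.
have jS : (j - 1).+1 = j by rewrite subn1 prednK //; apply: leq_trans hdj.
have inmu : forall p : 'I_s, nth t0 mu p \in P3 (d - 1) (j - 1).
  by move=> p; rewrite -(perm_mem hmu) mem_nth.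
have inlam : forall q : 'I_t, nth t0 lam q \in P3 (d - 1) j.
  by move=> q; rewrite -(perm_mem hlam) mem_nth.
have umu : uniq mu by rewrite (perm_uniq hmu) uniq_P3.
split.
  exists (\matrix_(p, q) Emap (orbsum K d (nth t0 lam q)) (rep x0 (nth t0 mu p))).
  move=> q m.
  rewrite (decomp x0 (n := (j - 1)%N) (L := mu) t0 d0) //.
  - by apply: eq_bigr => p _; rewrite mxE.
  - exact/symf_E/symf_orbsum.
  - by apply: degf_E; rewrite jS; apply: (degf_orbsum K); apply: P3_sum (inlam q).
move=> C EC.
split; last by rewrite /s /p3 (perm_size hmu).
have hK : (2 * (j - 1) < 3 * (d - 1))%N.
  have : (2 * j <= 3 * (d - 1))%N.
    move: hj; set N := (3 * (d - 1))%N => hj.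
    have e := odd_double_half N; rewrite -muln2 in e.
    move: (N./2) (odd N) e hj => h b e hj; lia.
  lia.
have H : forall p0 : 'I_s, exists c : 'cV[K]_t,
    forall p1 : 'I_s, (C *m c) p1 0 = (p1 == p0)%:R.
  move=> p0.
  have dg : degf (orbsum K d (nth t0 mu p0)) (j - 1)%N := degf_orbsum K (P3_sum (inmu p0)).
  have sg : symf (orbsum K d (nth t0 mu p0)) by apply: symf_orbsum.
  have le0 : ((j - 1) + 0 <= j - 1)%N by rewrite addn0.
  have [z [dz sz ez]] := @claim K d hchar (j - 1)%N hK (j - 1)%N 0%N _ le0 dg sg.
  rewrite addn0 jS in dz.
  have dec := decomp x0 t0 d0 sz dz hlam.
  have Ez := @Emap_sum _ _ _ _ _ _ dec.
  exists (\col_q z (rep x0 (nth t0 lam q))) => p1.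
  have E1 := Ez (rep x0 (nth t0 mu p1)).
  rewrite ez /= (orbsum_rep K x0 d0 (inmu p0) (inmu p1)) nth_uniq // in E1.
  rewrite (inj_eq val_inj) in E1.
  have -> : (p1 == p0)%:R = (if p1 == p0 then 1 else 0 : K) by case: (p1 == p0).
  rewrite E1.
  rewrite !mxE; apply: eq_bigr => q _; rewrite mxE mulrC; congr (_ * _).
  rewrite EC (bigD1 p1) //= (orbsum_rep K x0 d0 (inmu p1) (inmu p1)) eqxx mulr1.
  rewrite big1 ?addr0 // => p ne.
  by rewrite (orbsum_rep K x0 d0 (inmu p) (inmu p1)) nth_uniq // (inj_eq val_inj) eq_sym (negbTE ne) mulr0.
have [c Hc] := fin_all_exists H.
pose V : 'M[K]_(t, s) := \matrix_(q, p) c p q 0.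
have CV : C *m V = 1%:M.
  apply/matrixP => p1 p0; rewrite [RHS]mxE -Hc !mxE; apply: eq_bigr => q _; by rewrite !mxE.
apply/eqP; rewrite eqn_leq rank_leq_row /=.
by rewrite -{1}(mxrank1 K s) -CV mxrankM_maxl.
Qed.
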